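(* Let $k,c_1$ be real constants and let $F_2,F_3,N$ be smooth functions of $\theta$ on an interval satisfying $$N''+N=3F_3',\quad kN=(3F_2-c_1)F_2',\quad 2NF_2=(3F_2-c_1)F_3'+N'F_2',\quad 3NF_3=N'F_3'$$ (primes denote $d/d\theta$). In polar coordinates $x=r\cos\theta$, $y=r\sin\theta$ ($r>0$, $\theta$ in that interval), let $$V=\frac kr+\frac{F_2(\theta)}{r^2}+\frac{F_3(\theta)}{r^3}.$$ Then $$J=p_\theta^3+N(\theta)p_r+\Big(\frac1rN'(\theta)+3F_2(\theta)-c_1\Big)p_\theta$$ is a first integral of $\ddot x=-V_{,x}$, $\ddot y=-V_{,y}$, where $p_r=\dot r$ and $p_\theta=r^2\dot\theta=x\dot y-y\dot x$.
   Context: A first integral is a function of $(t,x,y,\dot x,\dot y)$ whose total time derivative vanishes along every solution of the given equations of motion. *)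

(* Defs.v *)
From Stdlib Require Import Reals.
From Coquelicot Require Import Coquelicot.
Open Scope R_scope.

Definition in_oint (a b : Rbar) (t : R) : Prop := Rbar_lt a t /\ Rbar_lt t b.

Definition smooth_on (a b : Rbar) (f : R -> R) : Prop :=
  forall n t, in_oint a b t -> ex_derive (Derive_n f n) t.

(* The potential V = k/r + F2(theta)/r^2 + F3(theta)/r^3 written as a function
   of Cartesian (x,y) near a point whose polar angle is th0: the angle theta is
   the continuous branch th0 + atan(v/u), where (u,v) are the coordinates of
   (x,y) rotated by -th0 (so theta = th0 exactly at the ray of angle th0). *)
Definition Vpot (k : R) (F2 F3 : R -> R) (th0 x y : R) : R :=
  let rho := sqrt (x ^ 2 + y ^ 2) in
  let u := x * cos th0 + y * sin th0 in
  let v := - x * sin th0 + y * cos th0 in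
  let th := th0 + atan (v / u) in
  k / rho + F2 th / rho ^ 2 + F3 th / rho ^ 3.

Definition Vx (k : R) (F2 F3 : R -> R) (r th : R) : R :=
  Derive (fun X => Vpot k F2 F3 th X (r * sin th)) (r * cos th).
Definition Vy (k : R) (F2 F3 : R -> R) (r th : R) : R :=
  Derive (fun Y => Vpot k F2 F3 th (r * cos th) Y) (r * sin th).

Definition Jtraj (c1 : R) (F2 N : R -> R) (r th : R -> R) (t : R) : R :=
  let pr := Derive r t in
  let pth := r t ^ 2 * Derive th t in
  pth ^ 3 + N (th t) * pr + (/ r t * Derive N (th t) + 3 * F2 (th t) - c1) * pth.

(* Main.v *)
Require Import Defs.
From Stdlib Require Import Reals Lra.
From Coquelicot Require Import Coquelicot.
Open Scope R_scope.
Ltac dummy := idtac.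
Lemma sc1 x : sin x * sin x + cos x * cos x = 1.
Proof. generalize (sin2_cos2 x); unfold Rsqr; lra. Qed.

Lemma Vx_eq k F2 F3 r th0 : 0 < r -> ex_derive F2 th0 -> ex_derive F3 th0 ->
  Vx k F2 F3 r th0 = cos th0 * (- k / r^2 - 2 * F2 th0 / r^3 - 3 * F3 th0 / r^4)
     - sin th0 * (Derive F2 th0 / r^2 + Derive F3 th0 / r^3) / r.
Proof.
intros hr d2 d3.
unfold Vx. apply is_derive_unique. unfold Vpot.
assert (H1 : r * cos th0 * (r * cos th0 * 1) + r * sin th0 * (r * sin th0 * 1) = r * r).
{ transitivity (r*r*(sin th0 * sin th0 + cos th0 * cos th0)); [ring|rewrite sc1; ring]. }
assert (H2 : - (r * cos th0) * sin th0 + r * sin th0 * cos th0 = 0) by ring.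
assert (H3 : r * cos th0 * cos th0 + r * sin th0 * sin th0 = r).
{ transitivity (r*(sin th0 * sin th0 + cos th0 * cos th0)); [ring|rewrite sc1; ring]. }
assert (H4 : atan (0 * / r) = 0) by (rewrite Rmult_0_l; apply atan_0).
auto_derive; rewrite ?H1, ?H2, ?H3, ?sqrt_square, ?H4, ?Rplus_0_r by lra.
- repeat split; try (apply Rgt_not_eq; apply Rlt_gt; repeat apply Rmult_lt_0_compat; lra); try nra; auto.
- change (fun x : R => F2 x) with F2. change (fun x : R => F3 x) with F3. field. lra.
Qed.

Lemma Vy_eq k F2 F3 r th0 : 0 < r -> ex_derive F2 th0 -> ex_derive F3 th0 ->
  Vy k F2 F3 r th0 = sin th0 * (- k / r^2 - 2 * F2 th0 / r^3 - 3 * F3 th0 / r^4)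
     + cos th0 * (Derive F2 th0 / r^2 + Derive F3 th0 / r^3) / r.
Proof.
intros hr d2 d3.
unfold Vy. apply is_derive_unique. unfold Vpot.
assert (H1 : r * cos th0 * (r * cos th0 * 1) + r * sin th0 * (r * sin th0 * 1) = r * r).
{ transitivity (r*r*(sin th0 * sin th0 + cos th0 * cos th0)); [ring|rewrite sc1; ring]. }
assert (H2 : - (r * cos th0) * sin th0 + r * sin th0 * cos th0 = 0) by ring.
assert (H3 : r * cos th0 * cos th0 + r * sin th0 * sin th0 = r).
{ transitivity (r*(sin th0 * sin th0 + cos th0 * cos th0)); [ring|rewrite sc1; ring]. }
assert (H4 : atan (0 * / r) = 0) by (rewrite Rmult_0_l; apply atan_0).
auto_derive; rewrite ?H1, ?H2, ?H3, ?sqrt_square, ?H4, ?Rplus_0_r by lra.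
- repeat split; try (apply Rgt_not_eq; apply Rlt_gt; repeat apply Rmult_lt_0_compat; lra); try nra; auto.
- change (fun x : R => F2 x) with F2. change (fun x : R => F3 x) with F3. field. lra.
Qed.
Ltac eta := repeat match goal with |- context [fun x : R => ?f x] => progress change (fun x : R => f x) with f end.
Ltac fixeq := match goal with |- @eq _ ?a ?b => change (@eq R a b) end.

Lemma d2cos (r th : R -> R) t (P : R -> Prop) : locally t P ->
  (forall s, P s -> ex_derive r s /\ ex_derive th s) ->
  ex_derive (Derive r) t -> ex_derive (Derive th) t ->
  Derive (Derive (fun s => r s * cos (th s))) t =
  Derive (Derive r) t * cos (th t) - 2 * Derive r t * sin (th t) * Derive th t
  - r t * cos (th t) * Derive th t ^ 2 - r t * sin (th t) * Derive (Derive th) t.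
Proof.
intros HP Hd dr dth.
rewrite (Derive_ext_loc _ (fun s => Derive r s * cos (th s) - r s * sin (th s) * Derive th s)).
- apply is_derive_unique. destruct (Hd t (locally_singleton _ _ HP)).
  auto_derive; eta; [repeat split; auto | fixeq; ring].
- apply (filter_imp P); auto. intros s Hs; destruct (Hd s Hs).
  apply is_derive_unique. auto_derive; eta; [repeat split; auto | fixeq; ring].
Qed.

Lemma d2sin (r th : R -> R) t (P : R -> Prop) : locally t P ->
  (forall s, P s -> ex_derive r s /\ ex_derive th s) ->
  ex_derive (Derive r) t -> ex_derive (Derive th) t ->
  Derive (Derive (fun s => r s * sin (th s))) t =
  Derive (Derive r) t * sin (th t) + 2 * Derive r t * cos (th t) * Derive th t
  - r t * sin (th t) * Derive th t ^ 2 + r t * cos (th t) * Derive (Derive th) t.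
Proof.
intros HP Hd dr dth.
rewrite (Derive_ext_loc _ (fun s => Derive r s * sin (th s) + r s * cos (th s) * Derive th s)).
- apply is_derive_unique. destruct (Hd t (locally_singleton _ _ HP)).
  auto_derive; eta; [repeat split; auto | fixeq; ring].
- apply (filter_imp P); auto. intros s Hs; destruct (Hd s Hs).
  apply is_derive_unique. auto_derive; eta; [repeat split; auto | fixeq; ring].
Qed.

Lemma solve2 R2 T2 R0 R1 T1 Vr Vt c s : R0 <> 0 -> s*s+c*c = 1 ->
 R2*c - 2*R1*s*T1 - R0*c*T1^2 - R0*s*T2 = -(c*Vr - s*Vt/R0) ->
 R2*s + 2*R1*c*T1 - R0*s*T1^2 + R0*c*T2 = -(s*Vr + c*Vt/R0) ->
 R2 = R0*T1^2 - Vr /\ T2 = (-Vt/R0 - 2*R1*T1)/R0.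
Proof.
intros h0 hsc h1 h2. split.
- assert (H : (R2 - R0*T1^2 + Vr)*(s*s+c*c) =
    c*((R2*c - 2*R1*s*T1 - R0*c*T1^2 - R0*s*T2) - (-(c*Vr - s*Vt/R0)))
    + s*((R2*s + 2*R1*c*T1 - R0*s*T1^2 + R0*c*T2) - (-(s*Vr + c*Vt/R0))))
    by (field; auto).
  rewrite h1, h2, hsc, !Rminus_diag in H. lra.
- assert (H : (R0*T2 - (-Vt/R0 - 2*R1*T1))*(s*s+c*c) =
    - s*((R2*c - 2*R1*s*T1 - R0*c*T1^2 - R0*s*T2) - (-(c*Vr - s*Vt/R0)))
    + c*((R2*s + 2*R1*c*T1 - R0*s*T1^2 + R0*c*T2) - (-(s*Vr + c*Vt/R0))))
    by (field; auto).
  rewrite h1, h2, hsc, !Rminus_diag in H.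
  apply (Rmult_eq_reg_l R0); auto. replace (R0 * ((- Vt / R0 - 2 * R1 * T1) / R0)) with (- Vt / R0 - 2 * R1 * T1) by (field; auto). lra.
Qed.

Theorem mainTheorem9 (k c1 : R) (a b : Rbar) (F2 F3 N : R -> R)
  (hF2 : smooth_on a b F2) (hF3 : smooth_on a b F3) (hN : smooth_on a b N)
  (e1 : forall th, in_oint a b th ->
     Derive (Derive N) th + N th = 3 * Derive F3 th)
  (e2 : forall th, in_oint a b th ->
     k * N th = (3 * F2 th - c1) * Derive F2 th)
  (e3 : forall th, in_oint a b th ->
     2 * N th * F2 th = (3 * F2 th - c1) * Derive F3 th + Derive N th * Derive F2 th)
  (e4 : forall th, in_oint a b th ->
     3 * N th * F3 th = Derive N th * Derive F3 th)
  (ta tb : Rbar) (r th : R -> R)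
  (hr : forall t, in_oint ta tb t -> ex_derive r t /\ ex_derive (Derive r) t)
  (hth : forall t, in_oint ta tb t -> ex_derive th t /\ ex_derive (Derive th) t)
  (rpos : forall t, in_oint ta tb t -> 0 < r t)
  (thI : forall t, in_oint ta tb t -> in_oint a b (th t))
  (motx : forall t, in_oint ta tb t ->
     Derive (Derive (fun s => r s * cos (th s))) t = - Vx k F2 F3 (r t) (th t))
  (moty : forall t, in_oint ta tb t ->
     Derive (Derive (fun s => r s * sin (th s))) t = - Vy k F2 F3 (r t) (th t)) :
  forall t, in_oint ta tb t -> is_derive (Jtraj c1 F2 N r th) t 0.
Proof.
intros t Ht.
assert (HP : locally t (in_oint ta tb)) by (destruct Ht; apply locally_interval with ta tb; auto; intros; split; auto).
destruct (hr t Ht) as [dr ddr]. destruct (hth t Ht) as [dth ddth].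
pose proof (thI t Ht) as Hi.
assert (dF2 : ex_derive F2 (th t)) by exact (hF2 0%nat _ Hi).
assert (dF3 : ex_derive F3 (th t)) by exact (hF3 0%nat _ Hi).
assert (dN : ex_derive N (th t)) by exact (hN 0%nat _ Hi).
assert (dN1 : ex_derive (Derive N) (th t)) by exact (hN 1%nat _ Hi).
pose proof (rpos t Ht) as r0.
pose proof (motx t Ht) as mx. pose proof (moty t Ht) as my.
assert (Hd : forall s, in_oint ta tb s -> ex_derive r s /\ ex_derive th s)
  by (intros s Hs; split; [apply (hr s Hs)|apply (hth s Hs)]).
rewrite (d2cos r th t _ HP Hd ddr ddth) in mx.
rewrite (d2sin r th t _ HP Hd ddr ddth) in my.
rewrite Vx_eq in mx by auto. rewrite Vy_eq in my by auto.
unfold Jtraj. cbv zeta.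
assert (r0' : r t <> 0) by lra.
destruct (solve2 _ _ _ _ _ _ _ _ _ r0' (sc1 _) mx my) as [hA hB].
assert (e1' : Derive (Derive N) (th t) = 3*Derive F3 (th t) - N (th t))
  by (rewrite <- (e1 _ Hi); ring).
auto_derive; eta.
{ repeat split; auto. }
rewrite hA, hB, e1'. fixeq.
transitivity ((k * N (th t) - (3 * F2 (th t) - c1) * Derive F2 (th t)) / r t ^ 2
  + (2 * N (th t) * F2 (th t) - ((3 * F2 (th t) - c1) * Derive F3 (th t) + Derive N (th t) * Derive F2 (th t))) / r t ^ 3
  + (3 * N (th t) * F3 (th t) - Derive N (th t) * Derive F3 (th t)) / r t ^ 4).
{ field. auto. }
rewrite (e2 _ Hi), (e3 _ Hi), (e4 _ Hi), !Rminus_diag. field. auto.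
Qed.
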